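(* For $n\ge 2$, $\frac{9}{5}(n-1)\le g(K_3,K_n)\le 2(n-1)$.
   Context: $K_m$ is the complete graph on $m$ vertices. A complete bipartite subgraph of a graph $G$ has two disjoint nonempty vertex classes $X,Y$ and edge set all $xy$ with $x\in X,y\in Y$. For graphs $G,H$, a block is a set $E(B_1)\times E(B_2)$ where $B_1$ is a complete bipartite subgraph of $G$ and $B_2$ a complete bipartite subgraph of $H$; $g(G,H)$ is the minimum number of blocks partitioning $E(G)\times E(H)$. *)

(* Defs.v *)
From mathcomp Require Import all_boot all_order.
Set Implicit Arguments. Unset Strict Implicit. Unset Printing Implicit Defensive.

(* A simple graph on a finite vertex type T is given by its edge set
   E : {set {set T}}, each edge being a 2-element subset of T. *)

Definition Kedges (m : nat) : {set {set 'I_m}} :=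
  [set e : {set 'I_m} | #|e| == 2].

Definition cbip_edges (T : finType) (X Y : {set T}) : {set {set T}} :=
  [set [set x; y] | x in X, y in Y].

Definition is_cbip (T : finType) (E F : {set {set T}}) : bool :=
  [exists X : {set T}, exists Y : {set T},
    [&& X != set0, Y != set0, [disjoint X & Y],
        [forall x in X, forall y in Y, [set x; y] \in E] &
        F == cbip_edges X Y]].

Definition is_block (T1 T2 : finType) (E1 : {set {set T1}}) (E2 : {set {set T2}})
    (S : {set {set T1} * {set T2}}) : bool :=
  [exists F1 : {set {set T1}}, exists F2 : {set {set T2}},
    [&& is_cbip E1 F1, is_cbip E2 F2 & S == setX F1 F2]].

Definition block_partition (T1 T2 : finType) (E1 : {set {set T1}}) (E2 : {set {set T2}})
    (P : {set {set {set T1} * {set T2}}}) : bool :=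
  partition P (setX E1 E2) && [forall S in P, is_block E1 E2 S].

(* The default
   value #|E(G) x E(H)| is attained by the partition into singletons
   (single edges are K_{1,1}), so this is the true minimum. *)
Definition gGH (T1 T2 : finType) (E1 : {set {set T1}}) (E2 : {set {set T2}}) : nat :=
  \big[minn/#|setX E1 E2|]_(P : {set {set {set T1} * {set T2}}} | block_partition E1 E2 P) #|P|.

(* Main.v *)
Require Import Defs.
From mathcomp Require Import all_boot all_order all_algebra.
From mathcomp Require Import ring lra zify.
Set Implicit Arguments. Unset Strict Implicit. Unset Printing Implicit Defensive.
Import Order.TTheory GRing.Theory Num.Theory.
Local Open Scope ring_scope.

Definition w n (x : 'I_n -> rat) (e : {set 'I_n}) := \prod_(i in e) x i.

Lemma w2 n (x : 'I_n -> rat) a b : a != b -> w x [set a; b] = x a * x b.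
Proof.
move=> ab; rewrite /w big_setU1 /= ?big_set1 //.
by rewrite in_set1.
Qed.

Lemma Kedges_eq n : Kedges n = [set [set p.1; p.2] | p in [set p : 'I_n * 'I_n | (p.1 < p.2)%N]].
Proof.
apply/setP => e; rewrite inE; apply/idP/imsetP.
  case/cards2P => a [b [ab ->]].
  case: (ltngtP a b) => H.
  - by exists (a, b); rewrite ?inE.
  - by exists (b, a); rewrite ?inE // setUC.
  - by move: ab; rewrite (val_inj H) eqxx.
case=> [[a b]]; rewrite inE /= => H ->.
have ab : a != b by apply/eqP => E; subst; rewrite ltnn in H.
by rewrite cards2 ab.
Qed.

Lemma pair_inj n : {in [set p : 'I_n * 'I_n | (p.1 < p.2)%N] &,
   injective (fun p : 'I_n * 'I_n => [set p.1; p.2])}.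
Proof.
move=> [a b] [c d]; rewrite !inE /= => H1 H2 E.
have Ha : a \in [set c; d] by rewrite -E !inE eqxx.
have Hb : b \in [set c; d] by rewrite -E !inE eqxx orbT.
have Hc : c \in [set a; b] by rewrite E !inE eqxx.
have Hd : d \in [set a; b] by rewrite E !inE eqxx orbT.
move: Ha Hb Hc Hd; rewrite !inE.
case/orP=> /eqP Ha; case/orP=> /eqP Hb; case/orP=> /eqP Hc; case/orP=> /eqP Hd;
  subst; rewrite ?ltnn // in H1 H2 *;
  try (by move: (ltn_trans H1 H2); rewrite ltnn).
Qed.

Lemma q_ident n (x : 'I_n -> rat) :
  2 * \sum_(e in Kedges n) w x e = (\sum_i x i) ^+ 2 - \sum_i x i ^+ 2.
Proof.
rewrite Kedges_eq big_imset /=; last exact: pair_inj.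
have -> : \sum_(p in [set p : 'I_n * 'I_n | (p.1 < p.2)%N]) w x [set p.1; p.2]
   = \sum_(i : 'I_n) \sum_(j : 'I_n | (i < j)%N) x i * x j.
  rewrite pair_big_dep /=; apply: eq_big => [[a b]|[a b]]; rewrite ?inE //=.
  move=> H; apply: w2; apply/eqP => E; subst; by rewrite ltnn in H.
have -> : (\sum_i x i) ^+ 2 = \sum_i \sum_j x i * x j.
  by rewrite expr2 mulr_suml; apply: eq_bigr => i _; rewrite mulr_sumr.
have Hs : forall i : 'I_n, \sum_j x i * x j = x i ^+ 2 + \sum_(j : 'I_n | (i < j)%N) x i * x j
          + \sum_(j : 'I_n | (j < i)%N) x i * x j.
  move=> i; rewrite (bigD1 i) //= expr2 -addrA; congr (_ + _).
  rewrite (bigID (fun j : 'I_n => (i < j)%N)) /=; congr (_ + _); apply: eq_bigl => j.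
    case: (ltngtP i j) => H; rewrite ?andbT ?andbF //=.
    by apply/eqP => E; subst; rewrite ltnn in H.
  case: (ltngtP i j) => H; rewrite ?andbT ?andbF //=.
    by apply/eqP => E; subst; rewrite ltnn in H.
  by rewrite (val_inj H) eqxx.
rewrite (eq_bigr _ (fun i _ => Hs i)) !big_split /=.
have -> : \sum_(i : 'I_n) \sum_(j : 'I_n | (j < i)%N) x i * x j = \sum_(i : 'I_n) \sum_(j : 'I_n | (i < j)%N) x i * x j.
  rewrite (exchange_big_dep predT) //=; apply: eq_bigr => i _; apply: eq_bigr => j _.
  exact: mulrC.
ring.
Qed.
Lemma kernel_exists (n : nat) (fs : seq ('I_n -> rat)) :
  (size fs < n)%N -> exists x : 'I_n -> rat, (exists i, x i != 0) /\
    (forall k, (k < size fs)%N -> \sum_i (nth (fun _ => 0) fs k) i * x i = 0).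
Proof.
move=> Hs.
pose M : 'M[rat]_(n, size fs) := \matrix_(i, j) nth (fun _ => 0) fs j i.
pose K := kermx M.
have HK : K != 0.
  rewrite -mxrank_eq0 /K mxrank_ker.
  have := rank_leq_col M; rewrite subn_eq0 -ltnNge => H.
  exact: leq_ltn_trans H Hs.
have [r Hr] : exists r, row r K != 0.
  apply/existsP; apply: contraR HK => /existsPn H.
  apply/eqP/row_matrixP => r; rewrite row0; exact/eqP/negPn/H.
have [i Hi] : exists i, row r K 0 i != 0.
  apply/existsP; apply: contraR Hr => /existsPn H.
  apply/eqP/rowP => i; move/negPn/eqP: (H i) => ->; by rewrite mxE.
exists (fun i => row r K 0 i); split; first by exists i.
move=> k Hk.
have : row r K *m M = 0 by apply/sub_kermxP; apply: row_sub.
move/matrixP => /(_ 0 (Ordinal Hk)); rewrite !mxE => H.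
apply: etrans H; apply: eq_bigr => j _; by rewrite [M _ _]mxE mulrC.
Qed.

Lemma sum_setX (T1 T2 : finType) (A : {set T1}) (B : {set T2}) (F : T1 -> T2 -> rat) :
  \sum_(p in setX A B) F p.1 p.2 = \sum_(a in A) \sum_(b in B) F a b.
Proof. by rewrite pair_big_dep; apply: eq_bigl => [[a b]]; rewrite in_setX. Qed.

Lemma cbip_sum n (X Y : {set 'I_n}) (x : 'I_n -> rat) : [disjoint X & Y] ->
  \sum_(e in cbip_edges X Y) w x e = (\sum_(i in X) x i) * (\sum_(j in Y) x j).
Proof.
move=> dXY; rewrite /cbip_edges curry_imset2X big_imset /=.
  transitivity (\sum_(p in setX X Y) w x [set p.1; p.2]); first by apply: eq_bigr => [[a b]].
  rewrite (sum_setX X Y (fun a b => w x [set a; b])) mulr_suml.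
  apply: eq_bigr => i Hi; rewrite mulr_sumr; apply: eq_bigr => j Hj.
  apply: w2; apply/eqP => E; subst; by rewrite (disjointFr dXY Hi) in Hj.
move=> [a b] [c d]; rewrite !in_setX /= => /andP [Ha Hb] /andP [Hc Hd] E.
have Ha' : a \in [set c; d] by rewrite -E !inE eqxx.
have Hb' : b \in [set c; d] by rewrite -E !inE eqxx orbT.
move: Ha' Hb'; rewrite !inE => /orP [/eqP Ea|/eqP Ea] /orP [/eqP Eb|/eqP Eb]; subst.
all: first [ by [] | by rewrite (disjointFr dXY Ha) in Hb | by rewrite (disjointFr dXY Ha) in Hd
  | by rewrite (disjointFr dXY Hc) in Hb | by rewrite (disjointFr dXY Hc) in Hd ].
Qed.

Definition wT n := ({set {set 'I_3}} * {set 'I_n} * {set 'I_n})%type.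
Definition bwit n (B : {set {set 'I_3} * {set 'I_n}}) (t : wT n) : bool :=
  [&& is_cbip (Kedges 3) t.1.1, [disjoint t.1.2 & t.2] &
      B == setX t.1.1 (cbip_edges t.1.2 t.2)].
Definition bw n (B : {set {set 'I_3} * {set 'I_n}}) : wT n :=
  odflt (set0, set0, set0) [pick t | bwit B t].

Lemma bw_spec n B : is_block (Kedges 3) (Kedges n) B -> bwit B (bw B).
Proof.
case/existsP => F1 /existsP [F2 /and3P [H1 /existsP [X /existsP [Y /and5P [_ _ dXY _ /eqP EF2]]] /eqP EB]].
rewrite /bw; case: pickP => [t //|H]; move: (H (F1, X, Y)).
by rewrite /bwit /= H1 dXY EB EF2 eqxx.
Qed.

Definition cs n (c : {set 'I_3} -> rat) (B : {set {set 'I_3} * {set 'I_n}}) :=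
  \sum_(f in (bw B).1.1) c f.

Lemma lowerA n P (HP : block_partition (Kedges 3) (Kedges n) P) (c : {set 'I_3} -> rat) :
  \sum_(f in Kedges 3) c f != 0 -> (n <= #|[set B in P | cs c B != 0%R]|.+1)%N.
Proof.
case/andP: HP => Hpart /forallP Hbl.
have Hw : forall B, B \in P -> bwit B (bw B).
  by move=> B HB; apply: bw_spec; exact: (implyP (Hbl B)).
move=> Hc; rewrite leqNgt; apply/negP => Hlt.
set Q := [set B in P | cs c B != 0].
pose fs := (fun _ : 'I_n => 1 : rat) ::
  [seq (fun i => if i \in (bw B).1.2 then 1 else 0 : rat) | B <- enum Q].
have Hsz : size fs = #|Q|.+1 by rewrite /= size_map -cardE.
have Hlt2 : (size fs < n)%N by rewrite Hsz.
have [x [[i0 Hi0] Hx]] := kernel_exists Hlt2.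
have Hsum : \sum_i x i = 0.
  have := Hx 0%N; rewrite Hsz => /(_ isT) /= H; apply: (etrans _ H).
  by apply: eq_bigr => i _; rewrite mul1r.
have HL : forall B, B \in Q -> \sum_(i in (bw B).1.2) x i = 0.
  move=> B HB; have Hin : B \in enum Q by rewrite mem_enum.
  have := Hx (index B (enum Q)).+1; rewrite Hsz ltnS cardE index_mem Hin => /(_ isT).
  rewrite /= (nth_map B) ?index_mem // nth_index // => H; apply: (etrans _ H).
  rewrite big_mkcond; apply: eq_bigr => i _.
  by case: ifP; rewrite ?mul1r ?mul0r.
have Hid : (\sum_(f in Kedges 3) c f) * \sum_(e in Kedges n) w x e = 0.
  transitivity (\sum_(p in setX (Kedges 3) (Kedges n)) c p.1 * w x p.2).
    by rewrite (sum_setX _ _ (fun a b => c a * w x b)) mulr_suml; apply: eq_bigr => f _; rewrite mulr_sumr.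
  rewrite (set_partition_big _ Hpart) big1 // => B HB.
  case/and3P: (Hw B HB) => _ dXY /eqP EB.
  rewrite {1}EB (sum_setX _ _ (fun a b => c a * w x b)).
  under eq_bigr do rewrite -mulr_sumr.
  rewrite -mulr_suml cbip_sum //.
  case: (boolP (B \in Q)) => HQ; first by rewrite HL // mul0r mulr0.
  by move: HQ; rewrite inE HB /= negbK => /eqP; rewrite /cs => ->; rewrite mul0r.
move/eqP: Hid; rewrite mulf_eq0 (negbTE Hc) /= => /eqP Hq.
have := q_ident x; rewrite Hq Hsum mulr0 expr0n /= sub0r => /eqP.
rewrite eq_sym oppr_eq0 => /eqP H2.
have := @psumr_eq0P _ _ _ _ (fun i _ => sqr_ge0 (x i)) H2 i0 isT.
by move/eqP; rewrite sqrf_eq0 (negbTE Hi0).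
Qed.

Lemma sum_bool_card (T : finType) (A : {set T}) (p : pred T) :
  (\sum_(f in A) (p f : nat) = #|[set f in A | p f]|)%N.
Proof.
rewrite -sum1_card big_mkcond [RHS]big_mkcond; apply: eq_bigr => f _.
by rewrite inE; case: (f \in A); case: (p f).
Qed.

Lemma sum_ifr_card (T : finType) (A : {set T}) (p : pred T) :
  \sum_(f in A) (if p f then 1 else 0 : rat) = (#|[set f in A | p f]|)%:R.
Proof.
rewrite -sum_bool_card natr_sum; apply: eq_bigr => f _; by case: (p f).
Qed.

Lemma K3_C (f : {set 'I_3}) k : f \in Kedges 3 -> k \notin f -> f = [set~ k].
Proof.
rewrite inE => /eqP Hf Hk; apply/eqP; rewrite eqEcard cardsC1 card_ord Hf leqnn andbT.
apply/subsetP => y Hy; rewrite !inE; apply/eqP => E; subst; by rewrite Hy in Hk.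
Qed.

Lemma K3_sum1 (f : {set 'I_3}) : f \in Kedges 3 -> (\sum_(k < 3) (k \notin f : nat) = 1)%N.
Proof.
rewrite inE => /eqP Hf.
have := cardsC f; rewrite Hf card_ord => H.
have E : #|~: f| = 1%N by apply/eqP; rewrite -(eqn_add2l 2) H.
apply: (etrans _ E); rewrite -sum1_card [RHS]big_mkcond; apply: eq_bigr => k _; rewrite inE; by case: (k \in f).
Qed.

Lemma K3_split (F : {set {set 'I_3}}) : F \subset Kedges 3 ->
  #|F| = (\sum_(k < 3) #|[set f in F | k \notin f]|)%N.
Proof.
move/subsetP => HF.
rewrite -[LHS]sum1_card.
transitivity (\sum_(f in F) \sum_(k < 3) (k \notin f : nat))%N.
  by apply: eq_bigr => f Hf; rewrite K3_sum1 // HF.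
rewrite exchange_big /=; apply: eq_bigr => k _; exact: sum_bool_card.
Qed.

Lemma K3_le1 (F : {set {set 'I_3}}) k : F \subset Kedges 3 ->
  (#|[set f in F | k \notin f]| <= 1)%N.
Proof.
move/subsetP => HF; apply: (@leq_trans #|[set [set~ k]]|); last by rewrite cards1.
apply: subset_leq_card.
apply/subsetP => f; rewrite !inE => /andP [Hf Hk]; apply/eqP; apply: K3_C => //.
exact: HF.
Qed.

Lemma K3_eq1 k : #|[set f in Kedges 3 | k \notin f]| = 1%N.
Proof.
have -> : [set f in Kedges 3 | k \notin f] = [set [set~ k]].
  apply/setP => f; rewrite !inE; apply/andP/eqP => [[Hf Hk]|->].
    by apply: K3_C => //; rewrite inE.
  by split; rewrite ?cardsC1 ?card_ord // !inE eqxx.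
by rewrite cards1.
Qed.

Lemma K3_card : #|Kedges 3| = 3%N.
Proof.
rewrite K3_split //.
transitivity (\sum_(k < 3) 1)%N; first by apply: eq_bigr => k _; exact: K3_eq1.
by rewrite sum_nat_const card_ord.
Qed.

Lemma cbip3 (F : {set {set 'I_3}}) : is_cbip (Kedges 3) F ->
  F \subset Kedges 3 /\ (0 < #|F| <= 2)%N.
Proof.
case/existsP => X /existsP [Y /and5P [X0 Y0 dXY /forallP HE /eqP EF]].
split.
  apply/subsetP => e; rewrite EF => /imset2P [a b Ha Hb ->].
  by move: (HE a); rewrite Ha /= => /forallP /(_ b); rewrite Hb.
have [a Ha] := set0Pn _ X0; have [b Hb] := set0Pn _ Y0.
apply/andP; split.
  rewrite card_gt0; apply/set0Pn; exists [set a; b]; rewrite EF.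
  by apply/imset2P; exists a b.
have H1 : (#|F| <= #|X| * #|Y|)%N.
  by rewrite EF /cbip_edges curry_imset2X -cardsX leq_imset_card.
have H2 : (#|X| + #|Y| <= 3)%N.
  have := max_card (mem (X :|: Y)); rewrite card_ord cardsU.
  by move: dXY; rewrite -setI_eq0 => /eqP ->; rewrite cards0 subn0.
have H3 : (0 < #|X|)%N by rewrite card_gt0.
have H4 : (0 < #|Y|)%N by rewrite card_gt0.
apply: (leq_trans H1).
move: H2 H3 H4; case: #|X| => [|[|[|x]]] //; case: #|Y| => [|[|[|y]]] //; lia.
Qed.

Definition c1 (k : 'I_3) (f : {set 'I_3}) : rat := if k \notin f then 1 else 0.
Definition c2 (k : 'I_3) (f : {set 'I_3}) : rat := 1 - 2 * c1 k f.

Lemma sum_c1 (F : {set {set 'I_3}}) k :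
  \sum_(f in F) c1 k f = (#|[set f in F | k \notin f]|)%:R.
Proof. exact: sum_ifr_card. Qed.

Lemma sum_c2 (F : {set {set 'I_3}}) k :
  \sum_(f in F) c2 k f = (#|F|)%:R - 2 * (#|[set f in F | k \notin f]|)%:R.
Proof. by rewrite /c2 sumrB sumr_const -mulr_sumr sum_c1. Qed.

Lemma arith3 (m : 'I_3 -> nat) : (forall k, m k <= 1)%N -> (0 < \sum_k m k <= 2)%N ->
  (2 * \sum_k (m k != 0%N : nat) + \sum_k (\sum_j m j != 2 * m k : nat) = 5)%N.
Proof.
move=> H; rewrite !big_ord_recl !big_ord0.
move: (H ord0) (H (lift ord0 ord0)) (H (lift ord0 (lift ord0 ord0))).
case: (m ord0) => [|[|a]] //; case: (m (lift ord0 ord0)) => [|[|b]] //;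
  case: (m (lift ord0 (lift ord0 ord0))) => [|[|c]] //.
Qed.

Lemma lowerB n P : block_partition (Kedges 3) (Kedges n) P -> (9 * (n - 1) <= 5 * #|P|)%N.
Proof.
move=> HP; have HA := lowerA HP.
have Hw : forall B, B \in P -> bwit B (bw B).
  case/andP: HP => _ /forallP Hbl.
  by move=> B HB; apply: bw_spec; exact: (implyP (Hbl B)).
have HQ1 : forall k, (n - 1 <= #|[set B in P | cs (c1 k) B != 0%R]|)%N.
  move=> k; rewrite leq_subLR add1n; apply: HA.
  by rewrite sum_c1 K3_eq1 oner_eq0.
have HQ2 : forall k, (n - 1 <= #|[set B in P | cs (c2 k) B != 0%R]|)%N.
  move=> k; rewrite leq_subLR add1n; apply: HA.
  by rewrite sum_c2 K3_eq1 K3_card mulr1 -natrB // pnatr_eq0.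
have Hwt : forall B, B \in P ->
   (2 * \sum_(k < 3) (cs (c1 k) B != 0%R : nat) + \sum_(k < 3) (cs (c2 k) B != 0%R : nat) = 5)%N.
  move=> B HB; case/and3P: (Hw B HB) => Hc _ _.
  have [Hsub Hcard] := cbip3 Hc.
  rewrite /cs.
  under eq_bigr do rewrite sum_c1 pnatr_eq0.
  under [X in (_ + X)%N]eq_bigr do rewrite sum_c2 -natrM subr_eq0 eqr_nat.
  rewrite (K3_split Hsub); apply: (arith3 (m := fun k => #|[set f in (bw B).1.1 | k \notin f]|)) => [k|]; first exact: K3_le1.
  by rewrite -(K3_split Hsub).
have -> : (5 * #|P| = \sum_(B in P) (2 * \sum_(k < 3) (cs (c1 k) B != 0%R : nat) + \sum_(k < 3) (cs (c2 k) B != 0%R : nat)))%N.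
  transitivity (\sum_(B in P) 5)%N; first by rewrite sum_nat_const mulnC.
  by apply: eq_bigr => B HB; rewrite Hwt.
rewrite big_split /= -big_distrr /= exchange_big [X in (_ + X)%N]exchange_big. under eq_bigr do rewrite sum_bool_card.
under [X in (_ + X)%N]eq_bigr do rewrite sum_bool_card.
have S1 : (3 * (n - 1) <= \sum_(k < 3) #|[set f in P | cs (c1 k) f != 0%R]|)%N.
  have : (\sum_(k < 3) (n - 1) <= \sum_(k < 3) #|[set f in P | cs (c1 k) f != 0%R]|)%N.
    by apply: leq_sum => k _; exact: HQ1.
  by rewrite sum_nat_const card_ord.
have S2 : (3 * (n - 1) <= \sum_(k < 3) #|[set f in P | cs (c2 k) f != 0%R]|)%N.
  have : (\sum_(k < 3) (n - 1) <= \sum_(k < 3) #|[set f in P | cs (c2 k) f != 0%R]|)%N.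
    by apply: leq_sum => k _; exact: HQ2.
  by rewrite sum_nat_const card_ord.
have H := leq_add (leq_mul (leqnn 2) S1) S2.
apply: leq_trans H.
lia.
Qed.

Local Close Scope ring_scope.

Definition o1 : 'I_3 := @Ordinal 3 1 isT.
Definition o2 : 'I_3 := @Ordinal 3 2 isT.
Definition A1 : {set {set 'I_3}} := [set e in Kedges 3 | ord0 \in e].
Definition A2 : {set {set 'I_3}} := [set e in Kedges 3 | ord0 \notin e].
Definition Ab (b : bool) := if b then A1 else A2.
Definition Iset n : {set 'I_n} := [set i : 'I_n | i.+1 < n].
Definition Sst n (i : 'I_n) := cbip_edges [set i] [set j : 'I_n | i < j].
Definition Blk n (b : bool) (i : 'I_n) := setX (Ab b) (Sst i).
Definition P0 n := [set Blk p.1 p.2 | p in setX [set: bool] (Iset n)].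

Lemma Ab_sub b : Ab b \subset Kedges 3.
Proof. by apply/subsetP => e; case: b; rewrite /= !inE => /andP []. Qed.

Lemma Ab_cbip b : is_cbip (Kedges 3) (Ab b).
Proof.
case: b => /=.
  apply/existsP; exists [set ord0]; apply/existsP; exists [set~ ord0].
  apply/and5P; split.
  - by apply/set0Pn; exists ord0; rewrite inE.
  - by apply/set0Pn; exists o1; rewrite !inE.
  - by rewrite disjoints1 !inE eqxx.
  - apply/forallP => x; apply/implyP; rewrite inE => /eqP ->.
    apply/forallP => y; apply/implyP; rewrite !inE => Hy; by rewrite cards2 (eq_sym ord0) Hy.
  - apply/eqP/setP => e; rewrite !inE; apply/andP/imset2P.
      case=> /cards2P [a [b [ab ->]]]; rewrite !inE => /orP [/eqP Ea|/eqP Eb].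
        by subst a; exists ord0 b; rewrite ?inE // eq_sym.
      by subst b; exists ord0 a; rewrite ?inE // setUC.
    case=> a b; rewrite !inE => /eqP -> Hb ->; by rewrite cards2 (eq_sym ord0) Hb !inE eqxx.
apply/existsP; exists [set o1]; apply/existsP; exists [set o2].
apply/and5P; split.
- by apply/set0Pn; exists o1; rewrite inE.
- by apply/set0Pn; exists o2; rewrite !inE.
- by rewrite disjoints1 !inE.
- apply/forallP => x; apply/implyP; rewrite inE => /eqP ->.
  apply/forallP => y; apply/implyP; rewrite !inE => /eqP ->; by rewrite cards2.
- apply/eqP/setP => e; rewrite !inE; apply/andP/imset2P.
    case=> He H0; exists o1 o2; rewrite ?inE //.
    apply/eqP; rewrite eqEcard cards2 /= (eqP He) andbT.
    apply/subsetP => x Hx; rewrite !inE.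
    case: x Hx => [[|[|[|x]]] Hx] // Hin.
    by move: H0; rewrite (_ : ord0 = Ordinal Hx) ?Hin //; exact: val_inj.
  by case=> a b; rewrite !inE => /eqP -> /eqP -> ->; rewrite cards2 !inE.
Qed.

Lemma neq_lt n (a b : 'I_n) : a < b -> a != b.
Proof. by move=> H; apply/eqP => E; subst; rewrite ltnn in H. Qed.

Lemma Sst_sub n (i : 'I_n) : Sst i \subset Kedges n.
Proof.
apply/subsetP => e /imset2P [a b]; rewrite !inE => /eqP -> Hb ->.
by rewrite cards2 neq_lt.
Qed.

Lemma Sst_cbip n (i : 'I_n) : i \in Iset n -> is_cbip (Kedges n) (Sst i).
Proof.
rewrite inE => Hi.
apply/existsP; exists [set i]; apply/existsP; exists [set j : 'I_n | i < j].
apply/and5P; split.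
- by apply/set0Pn; exists i; rewrite inE.
- by apply/set0Pn; exists (Ordinal Hi); rewrite !inE /=.
- by rewrite disjoints1 !inE ltnn.
- apply/forallP => x; apply/implyP; rewrite inE => /eqP ->.
  apply/forallP => y; apply/implyP; rewrite !inE => Hy; by rewrite cards2 neq_lt.
- by [].
Qed.

Lemma Iset_card n : #|Iset n| <= n - 1.
Proof.
case: n => [|m]; first by apply: (leq_trans (max_card _)); rewrite card_ord.
apply: (@leq_trans #|[set~ (@ord_max m)]|); last by rewrite cardsC1 card_ord subn1.
apply: subset_leq_card; apply/subsetP => i; rewrite !inE => Hi.
by apply/eqP => E; rewrite E /= ltnn in Hi.
Qed.

Lemma P0_part n : partition (P0 n) (setX (Kedges 3) (Kedges n)).
Proof.
apply/and3P; split.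
- apply/eqP/setP => [[f e]]; apply/bigcupP/idP.
    case=> B /imsetP [[b i] Hbi ->]; rewrite /Blk !in_setX => /andP [Hf He].
    by rewrite (subsetP (Ab_sub b) _ Hf) (subsetP (Sst_sub i) _ He).
  rewrite in_setX => /andP [Hf He].
  move: He; rewrite Kedges_eq => /imsetP [[a c]]; rewrite inE /= => Hac ->.
  exists (Blk (ord0 \in f) a).
    apply/imsetP; exists ((ord0 \in f), a) => //.
    by rewrite in_setX in_setT !inE /= (leq_ltn_trans Hac (ltn_ord c)).
  rewrite /Blk in_setX; apply/andP; split.
    by case: (boolP (ord0 \in f)) => H /=; rewrite /A1 /A2 in_set Hf H.
  by apply/imset2P; exists a c; rewrite ?inE.
- apply/trivIsetP => B1 B2 /imsetP [[b1 i1] H1 ->] /imsetP [[b2 i2] H2 ->] Hne.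
  rewrite -setI_eq0; apply/eqP/setP => [[f e]]; rewrite inE in_set0 /Blk !in_setX.
  apply/negP => /andP [/andP [Hf1 He1] /andP [Hf2 He2]].
  have Eb : b1 = b2.
    by move: Hf1 Hf2; case: (b1); case: (b2) => //=; rewrite !inE => /andP [_ H] /andP [_ H0]; move: H H0; case: (ord0 \in f).
  move: He1 He2 => /imset2P [a1 c1]; rewrite !inE => /eqP -> Hc1 E1.
  move=> /imset2P [a2 c2]; rewrite !inE => /eqP -> Hc2 E2.
  have := @pair_inj n (i1, c1) (i2, c2); rewrite !inE /= => /(_ Hc1 Hc2).
  rewrite -E1 -E2 => /(_ erefl) [Ea _].
  by move: Hne; rewrite Eb Ea eqxx.
- apply/imsetP => [[[b i] Hbi E]].
  move: Hbi; rewrite in_setX !inE /= => Hi.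
  pose f0 := if b then [set ord0; o1] else [set o1; o2].
  have : (f0, [set i; Ordinal Hi]) \in set0.
    rewrite E /Blk in_setX; apply/andP; split.
      by rewrite /f0; case: (b); rewrite /= !inE cards2.
    by apply/imset2P; exists i (Ordinal Hi); rewrite ?inE /=.
  by rewrite inE.
Qed.

Lemma bigmin_le (I : finType) (P : pred I) (F : I -> nat) d i0 :
  P i0 -> \big[minn/d]_(i | P i) F i <= F i0.
Proof.
move=> Hi0; have := mem_index_enum i0; elim: (index_enum I) => // a s IH.
rewrite inE big_cons => /orP [/eqP <-|/IH H]; first by rewrite Hi0 geq_minl.
by case: (P a) => //; apply: leq_trans (geq_minr _ _) H.
Qed.

Lemma part_card (T : finType) (P : {set {set T}}) D : partition P D -> #|P| <= #|D|.
Proof.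
move=> HP; rewrite (card_partition HP) -sum1_card; apply: leq_sum => A HA.
case/and3P: HP => _ _ H0; rewrite card_gt0; apply: contraNneq H0 => <-; exact: HA.
Qed.

Theorem mainTheorem6 (n : nat) (hn : 2 <= n) :
  9 * (n - 1) <= 5 * gGH (Kedges 3) (Kedges n) /\
  gGH (Kedges 3) (Kedges n) <= 2 * (n - 1).
Proof.
have HP0 : block_partition (Kedges 3) (Kedges n) (P0 n).
  apply/andP; split; first exact: P0_part.
  apply/forallP => B; apply/implyP => /imsetP [[b i] Hbi ->]; move: Hbi.
  rewrite in_setX => /andP [_ Hi] /=.
  apply/existsP; exists (Ab b); apply/existsP; exists (Sst i).
  by rewrite Ab_cbip ?Sst_cbip //; apply/eqP.
have Hcard : #|P0 n| <= 2 * (n - 1).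
  rewrite /P0; apply: leq_trans (leq_imset_card _ _) _.
  by rewrite cardsX cardsT card_bool leq_mul2l Iset_card.
split.
- rewrite /gGH; apply: (big_ind (fun m => 9 * (n - 1) <= 5 * m)).
  + apply: leq_trans (lowerB HP0) _; rewrite leq_mul2l; exact: part_card (P0_part n).
  + by move=> x y Hx Hy; rewrite /minn; case: ifP.
  + by move=> P HP; exact: lowerB.
- apply: leq_trans Hcard; rewrite /gGH; exact: bigmin_le.
Qed.
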